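(* Let $r\ge1$, let $G=(V,A)$ be a weakly connected directed graph with distinct nodes $s,t$. Then the function $\mathbb{R}_{\ge0}^A\to\mathbb{R}\cup\{\infty\}$, $y\mapsto R^y_{s,t}$, is convex.
   Context: Fix $r\ge1$. For $y\in\mathbb{R}_{\ge 0}^A$ let $\operatorname{supp}(y)=\{a\in A: y_a>0\}$, let $G'=(V,\operatorname{supp}(y))$ with node-arc incidence matrix $\Gamma'$ (entry $+1$ if the arc leaves the node, $-1$ if it enters, $0$ otherwise). Define $R^y_{s,t}=\min\{\sum_{a\in\operatorname{supp}(y)} |f_a|^{r+1}/y_a^{r} : f\in\mathbb{R}^{\operatorname{supp}(y)},\ \Gamma' f=\mathbf{1}_s-\mathbf{1}_t\}$, with $R^y_{s,t}=\infty$ if $s$ and $t$ are not connected in $G'$. *)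

(* Defs.v *)
From HB Require Import structures.
From mathcomp Require Import all_boot all_order all_algebra.
From mathcomp Require Import all_classical all_reals all_analysis.
Set Implicit Arguments. Unset Strict Implicit. Unset Printing Implicit Defensive.
Import Order.TTheory GRing.Theory Num.Theory.
Local Open Scope classical_set_scope.
Local Open Scope ring_scope.

Definition weakly_connected (V A : finType) (src tgt : A -> V) : Prop :=
  forall u v : V,
    connect (fun x y => [exists a : A,
      ((src a == x) && (tgt a == y)) || ((src a == y) && (tgt a == x))]) u v.

Definition supp (R : realType) (A : finType) (y : A -> R) : pred A :=
  fun a => 0 < y a.

(* s and t connected in G' = (V, supp y) (undirected sense, as in the paper's
   "not connected in G'"). *)
Definition connected_in_supp (R : realType) (V A : finType) (src tgt : A -> V)
    (y : A -> R) (s t : V) : bool :=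
  connect (fun x z => [exists a : A, (a \in supp y) &&
      (((src a == x) && (tgt a == z)) || ((src a == z) && (tgt a == x)))]) s t.

Definition incid (R : realType) (V A : finType) (src tgt : A -> V) (v : V) (a : A) : R :=
  (src a == v)%:R - (tgt a == v)%:R.

(* f in R^{supp y} (encoded as f : A -> R vanishing off supp y) with Γ' f = 1_s - 1_t *)
Definition st_flow (R : realType) (V A : finType) (src tgt : A -> V)
    (y : A -> R) (s t : V) (f : A -> R) : Prop :=
  (forall a, a \notin supp y -> f a = 0) /\
  (forall v : V, \sum_(a | a \in supp y) incid R src tgt v a * f a
                 = (v == s)%:R - (v == t)%:R).

Definition flow_cost (R : realType) (A : finType) (r : R) (y f : A -> R) : R :=
  \sum_(a | a \in supp y) (`|f a| `^ (r + 1) / (y a) `^ r).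

(* R^y_{s,t}: +oo if s,t not connected in G', otherwise the minimum
   (taken as the infimum, which is attained) of the flow cost. *)
Definition Rst (R : realType) (V A : finType) (src tgt : A -> V) (r : R)
    (s t : V) (y : A -> R) : \bar R :=
  if connected_in_supp src tgt y s t then
    ereal_inf [set (flow_cost r y f)%:E | f in [set f | st_flow src tgt y s t f]]
  else +oo%E.

(* Main.v *)
From HB Require Import structures.
From mathcomp Require Import all_boot all_order all_algebra.
From mathcomp Require Import all_classical all_reals all_analysis.
Require Import Defs.
From mathcomp Require Import ring lra.
Import Order.TTheory GRing.Theory Num.Theory.
Local Open Scope ring_scope.

Lemma pconv (R : realType) (p w x y : R) : 1 <= p -> 0 <= w -> w <= 1 -> 0 <= x -> 0 <= y ->
  (w * x + (1 - w) * y) `^ p <= w * x `^ p + (1 - w) * y `^ p.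
Proof.
move=> p1 w0 w1 x0 y0.
have := @convex_powR R p p1 (Itv01 w0 w1) x y.
rewrite !inE /= !in_itv /= !andbT => /(_ x0 y0).
rewrite /conv /=. move=> H. exact H.
Qed.

Definition T (R : realType) (r y f : R) : R :=
  if 0 < y then `|f| `^ (r + 1) / y `^ r else 0.

Arguments T {R}.
Lemma T_ge0 (R : realType) (r y f : R) : 0 <= T r y f.
Proof. rewrite /T; case: ifP => // _; by rewrite divr_ge0 ?powR_ge0. Qed.

Lemma T_alt (R : realType) (r y f : R) : 0 <= r -> 0 <= y -> (y <= 0 -> f = 0) ->
  y * (`|f| / y) `^ (r + 1) = T r y f.
Proof.
move=> r0 y0 hf; rewrite /T; case: ifPn => yp; last first.
  have y00 : y = 0 by apply/eqP; rewrite eq_le y0 andbT leNgt.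
  by rewrite y00 mul0r.
have yr : 0 < y `^ r by rewrite powR_gt0.
apply: (mulIf (lt0r_neq0 yr)); rewrite divfK ?gt_eqF //.
rewrite mulrAC -{1}(powRr1 (ltW yp)) -powRD; last by apply/implyP => _; rewrite gt_eqF.
rewrite (addrC 1 r) -powRM ?divr_ge0 ?normr_ge0 ?ltW //.
rewrite mulrC divfK ?gt_eqF //.
Qed.

Lemma T_conv (R : realType) (r lam y1 y2 f1 f2 : R) : 0 <= r -> 0 < lam -> lam < 1 ->
  0 <= y1 -> 0 <= y2 -> (y1 <= 0 -> f1 = 0) -> (y2 <= 0 -> f2 = 0) ->
  T r (lam * y1 + (1 - lam) * y2) (lam * f1 + (1 - lam) * f2)
  <= lam * T r y1 f1 + (1 - lam) * T r y2 f2.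
Proof.
move=> r0 l0 l1 y10 y20 hf1 hf2.
have l1' : 0 < 1 - lam by rewrite subr_gt0.
have l0w := ltW l0. have l1w := ltW l1'.
set y := lam * y1 + (1 - lam) * y2.
rewrite {1}/T; case: ifPn => yp; last first.
  by apply: addr_ge0; apply: mulr_ge0; rewrite ?T_ge0.
have yw := ltW yp.
have e1 : lam * `|f1| = lam * y1 * (`|f1| / y1).
  have [y1p|y1n] := ltP 0 y1; first by rewrite -mulrA (mulrC y1) divfK ?gt_eqF.
  by rewrite hf1 // normr0 mul0r !mulr0.
have e2 : (1 - lam) * `|f2| = (1 - lam) * y2 * (`|f2| / y2).
  have [y2p|y2n] := ltP 0 y2; first by rewrite -mulrA (mulrC y2) divfK ?gt_eqF.
  by rewrite hf2 // normr0 mul0r !mulr0.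
have u10 : 0 <= `|f1| / y1 by rewrite divr_ge0.
have u20 : 0 <= `|f2| / y2 by rewrite divr_ge0.
set u1 := `|f1| / y1 in e1 u10 *. set u2 := `|f2| / y2 in e2 u20 *.
have w0 : 0 <= lam * y1 / y by rewrite divr_ge0 // mulr_ge0.
set w := lam * y1 / y in w0 *.
have w1 : 1 - w = (1 - lam) * y2 / y.
  by rewrite /w; apply: (mulIf (lt0r_neq0 yp)); rewrite mulrBl !divfK ?gt_eqF // mul1r /y addrC addKr.
have wle1 : w <= 1 by rewrite -subr_ge0 w1 divr_ge0 // mulr_ge0.
have w1' : 0 <= 1 - w by rewrite subr_ge0.
have hb : `|lam * f1 + (1 - lam) * f2| <= y * (w * u1 + (1 - w) * u2).
  have hy : forall a b, y * (a / y * b) = a * b.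
    by move=> a b; rewrite mulrA [y * _]mulrC divfK ?gt_eqF.
  rewrite mulrDr w1 /w !hy -e1 -e2.
  by rewrite (le_trans (ler_normD _ _)) // !normrM (ger0_norm l0w) (ger0_norm l1w).
have p1 : 1 <= r + 1 by rewrite lerDr.
have p0 : 0 <= r + 1 by rewrite (le_trans _ p1).
have s0 : 0 <= w * u1 + (1 - w) * u2 by rewrite addr_ge0 // mulr_ge0.
apply: (@le_trans _ _ ((y * (w * u1 + (1 - w) * u2)) `^ (r + 1) / y `^ r)).
  by rewrite ler_pM2r ?invr_gt0 ?powR_gt0 // ge0_ler_powR ?nnegrE // mulr_ge0.
rewrite powRM //.
rewrite powRD; last by apply/implyP => _; rewrite gt_eqF.
rewrite powRr1 //.
have yrn : y `^ r != 0 by rewrite gt_eqF ?powR_gt0.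
have hc : forall b c, y `^ r * b * c / y `^ r = b * c.
  by move=> b c; rewrite mulrAC [y `^ r * b / y `^ r]mulrAC mulfV // mul1r.
rewrite hc.
apply: (@le_trans _ _ (y * (w * u1 `^ (r + 1) + (1 - w) * u2 `^ (r + 1)))).
  by rewrite ler_pM2l // pconv.
have hy : forall a b, y * (a / y * b) = a * b.
  by move=> a b; rewrite mulrA [y * _]mulrC divfK ?gt_eqF.
rewrite mulrDr w1 /w !hy.
by rewrite -!mulrA !T_alt.
Qed.

Section Main.
Variables (R : realType) (V A : finType) (src tgt : A -> V) (r : R) (s t : V).

Lemma sum_supp (z g h : A -> R) : (forall a, a \notin supp z -> g a = 0) ->
  \sum_(a | a \in supp z) h a * g a = \sum_a h a * g a.
Proof.
move=> hg; rewrite big_mkcond /=; apply: eq_bigr => a _.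
by case: ifPn => // /hg ->; rewrite mulr0.
Qed.

Lemma cost_T (y f : A -> R) : flow_cost r y f = \sum_a T r (y a) (f a).
Proof. by rewrite /flow_cost big_mkcond; apply: eq_bigr => a _; rewrite /T. Qed.

Lemma Rst_ge0 (y : A -> R) : (0 <= Rst src tgt r s t y)%E.
Proof.
rewrite /Rst; case: ifP => _ //; apply: le_ereal_inf_tmp => z [f _ <-].
rewrite lee_fin /flow_cost; apply: sumr_ge0 => a _.
by rewrite divr_ge0 ?powR_ge0.
Qed.

Lemma conn_mono (y1 y : A -> R) : (forall a, a \in supp y1 -> a \in supp y) ->
  connected_in_supp src tgt y1 s t -> connected_in_supp src tgt y s t.
Proof.
move=> hs; rewrite /connected_in_supp; apply: connect_sub => x z /existsP[a /andP[ha h]].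
apply: connect1; apply/existsP; exists a; by rewrite hs.
Qed.

Lemma supp_comb (y1 y2 : A -> R) (lam : R) : (forall a, 0 <= y1 a) -> (forall a, 0 <= y2 a) ->
  0 < lam -> lam < 1 -> forall a, a \in supp y1 ->
  a \in supp (fun a => lam * y1 a + (1 - lam) * y2 a).
Proof.
move=> hy1 hy2 l0 l1 a; rewrite !unfold_in /supp => h.
apply: (lt_le_trans (mulr_gt0 l0 h)); rewrite lerDl mulr_ge0 //.
by rewrite subr_ge0 ltW.
Qed.

Lemma flow_comb (y1 y2 f1 f2 : A -> R) (lam : R) : (forall a, 0 <= y1 a) -> (forall a, 0 <= y2 a) ->
  0 < lam -> lam < 1 ->
  st_flow src tgt y1 s t f1 -> st_flow src tgt y2 s t f2 ->
  st_flow src tgt (fun a => lam * y1 a + (1 - lam) * y2 a) s t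
    (fun a => lam * f1 a + (1 - lam) * f2 a).
Proof.
move=> hy1 hy2 l0 l1 [oo1 c1] [oo2 c2].
have l1' : 0 < 1 - lam by rewrite subr_gt0.
have l2 : 1 - lam < 1 by rewrite -subr_gt0 opprB addrC subrK.
have off : forall a, a \notin supp (fun a => lam * y1 a + (1 - lam) * y2 a) ->
    lam * f1 a + (1 - lam) * f2 a = 0.
  move=> a ha; rewrite oo1 ?oo2 ?mulr0 ?addr0 //.
  - apply: contra ha => h.
    have := @supp_comb y2 y1 (1 - lam) hy2 hy1 l1' l2 a h.
    have e : 1 - (1 - lam) = lam by ring.
    by rewrite !unfold_in /supp e addrC.
  - apply: contra ha => h. exact: supp_comb.
split => // v.
rewrite (sum_supp _ _ _ off).
rewrite (eq_bigr (fun a => lam * (incid R src tgt v a * f1 a) + (1 - lam) * (incid R src tgt v a * f2 a))); last first.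
  by move=> a _; rewrite mulrDr !(mulrCA (incid R src tgt v a)).
rewrite big_split /= -!mulr_sumr -(sum_supp _ _ _ oo1) -(sum_supp _ _ _ oo2) c1 c2.
by rewrite -mulrDl subrKC mul1r.
Qed.

Lemma cost_comb (y1 y2 f1 f2 : A -> R) (lam : R) : 1 <= r -> (forall a, 0 <= y1 a) -> (forall a, 0 <= y2 a) ->
  0 < lam -> lam < 1 ->
  st_flow src tgt y1 s t f1 -> st_flow src tgt y2 s t f2 ->
  flow_cost r (fun a => lam * y1 a + (1 - lam) * y2 a) (fun a => lam * f1 a + (1 - lam) * f2 a)
  <= lam * flow_cost r y1 f1 + (1 - lam) * flow_cost r y2 f2.
Proof.
move=> hr hy1 hy2 l0 l1 [oo1 _] [oo2 _].
rewrite !cost_T !mulr_sumr -big_split /=; apply: ler_sum => a _.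
apply: T_conv => //; first exact: le_trans hr.
- by move=> h; apply: oo1; rewrite unfold_in /supp -leNgt.
- by move=> h; apply: oo2; rewrite unfold_in /supp -leNgt.
Qed.

End Main.

Theorem lemma3 (R : realType) (V A : finType) (src tgt : A -> V) (r : R) (s t : V)
    (hr : 1 <= r) (hG : weakly_connected src tgt) (hst : s != t)
    (y1 y2 : A -> R) (hy1 : forall a, 0 <= y1 a) (hy2 : forall a, 0 <= y2 a)
    (lam : R) (hlam0 : 0 < lam) (hlam1 : lam < 1) :
  (Rst src tgt r s t (fun a => (lam * y1 a + (1 - lam) * y2 a)%R)
    <= lam%:E * Rst src tgt r s t y1 + (1 - lam)%:E * Rst src tgt r s t y2)%E.
Proof.
have l1' : 0 < 1 - lam by rewrite subr_gt0.
have l2 : 1 - lam < 1 by rewrite -subr_gt0 opprB addrC subrK.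
have e1l : 1 - (1 - lam) = lam by ring.
have ge1 : (0 <= Rst src tgt r s t y1)%E by apply: Rst_ge0.
have ge2 : (0 <= Rst src tgt r s t y2)%E by apply: Rst_ge0.
have Einf : forall c : R, 0 < c -> forall x, (0 <= x)%E -> (c%:E * +oo + x = +oo)%E.
  move=> c c0 x x0; rewrite mulry gtr0_sg // mul1e addye //.
  by apply: contraTN x0 => /eqP ->.
move: ge1 ge2; case E1: (Rst src tgt r s t y1) => [c1| |] // g1;
  case E2: (Rst src tgt r s t y2) => [c2| |] // g2;
  try (by rewrite Einf ?leey // mule_ge0 // lee_fin ltW);
  try (by rewrite addeC Einf ?leey // mule_ge0 // lee_fin ltW).
have conn_of : forall (z : A -> R) c, Rst src tgt r s t z = c%:E ->
    connected_in_supp src tgt z s t /\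
    ereal_inf [set (flow_cost r z f)%:E | f in [set f | st_flow src tgt z s t f]] = c%:E.
  by move=> z c; rewrite /Rst; case: ifP.
have [cn1 I1] := conn_of _ _ E1.
have [cn2 I2] := conn_of _ _ E2.
have cn : connected_in_supp src tgt (fun a => lam * y1 a + (1 - lam) * y2 a) s t.
  apply: conn_mono cn1; exact: supp_comb.
rewrite /Rst cn -!EFinM -EFinD.
apply/lee_addgt0Pr => e e0.
have : (ereal_inf [set (flow_cost r y1 f)%:E | f in [set f | st_flow src tgt y1 s t f]]
    < (c1 + e)%:E)%E by rewrite I1 lte_fin ltrDl.
move/ereal_inf_lt => [_ [f1 hf1 <-]].
rewrite lte_fin => hc1.
have : (ereal_inf [set (flow_cost r y2 f)%:E | f in [set f | st_flow src tgt y2 s t f]]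
    < (c2 + e)%:E)%E by rewrite I2 lte_fin ltrDl.
move/ereal_inf_lt => [_ [f2 hf2 <-]].
rewrite lte_fin => hc2.
apply: ge_ereal_inf.
exists (flow_cost r (fun a => lam * y1 a + (1 - lam) * y2 a)
          (fun a => lam * f1 a + (1 - lam) * f2 a))%:E.
  by exists (fun a => lam * f1 a + (1 - lam) * f2 a) => //; apply: flow_comb.
rewrite lee_fin; apply: (@le_trans _ _ (lam * flow_cost r y1 f1 + (1 - lam) * flow_cost r y2 f2)); first by apply: cost_comb => //; [exact: hf1 | exact: hf2].
have : lam * flow_cost r y1 f1 <= lam * (c1 + e) by rewrite ler_pM2l // ltW.
have : (1 - lam) * flow_cost r y2 f2 <= (1 - lam) * (c2 + e) by rewrite ler_pM2l // ltW.
move=> h2 h1.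
have -> : lam * c1 + (1 - lam) * c2 + e = lam * (c1 + e) + (1 - lam) * (c2 + e) by ring.
exact: lerD.
Qed.
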